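(* Let $X=\{e_1,e'_1,e_2,e'_2\}$ be the trivial quandle of order $4$ (i.e. $x^y=x$ for all $x,y$), let $\rho:X\to X$ be the good involution with $\rho(e_i)=e'_i$, $\rho(e'_i)=e_i$ ($i=1,2$), let $Y=\{e\}$ (a one-point $(X,\rho)$-set), and let $\theta:\mathbb{Z}(Y\times X^2)\to\mathbb{Z}$ be the linear extension of $\theta=\chi_{(e,e_1,e_2)}+\chi_{(e,e'_1,e'_2)}-\chi_{(e,e'_1,e_2)}-\chi_{(e,e_1,e'_2)}$, where $\chi_{(e,a,b)}(e,x,y)=1$ if $(x,y)=(a,b)$ and $0$ otherwise. Let $D$ be a diagram of a $2$-component unoriented link $L$. Then $\Phi_\theta(D)=\{m,m,m,m,-m,-m,-m,-m,0,0,0,0,0,0,0,0\}$, where $m$ is the linking number of $D$ when $D$ is given an orientation.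
   Context: For a symmetric quandle $(X,\rho)$ (here: a quandle with an involution $\rho$ satisfying $\rho(x^y)=\rho(x)^y$ and $x^{\rho(y)}=x^{y^{-1}}$; for a trivial quandle every involution qualifies) and a one-point set $Y=\{e\}$ with trivial action, an $(X,\rho)_Y$-coloring of an unoriented link diagram $D\subset\mathbb{R}^2$ is defined as follows. Semi-arcs are the arcs obtained by cutting the over-arcs of $D$ at crossings. Assign to each semi-arc a normal orientation and an element of $X$ such that at each crossing: (i) the two over semi-arcs, labeled $x_1,x_2$, satisfy $x_1=x_2$ if their normal orientations are coherent and $x_1=\rho(x_2)$ otherwise; (ii) if the under semi-arcs $e_1,e_2$ are labeled $x_1,x_2$ and an over semi-arc labeled $x_3$ has normal pointing from $e_1$ to $e_2$, then $x_1^{x_3}=x_2$ if the normals of $e_1,e_2$ are coherent and $x_1^{x_3}=\rho(x_2)$ otherwise. A coloring is an equivalence class of such assignments under basic inversions (reversing the normal of one semi-arc and replacing its label $x$ by $\rho(x)$); all regions are labeled $e$. The weight of a crossing $v$: pick a region $f$ at $v$; let the under and over semi-arcs facing $f$ have (after basic inversions) normals $n_1,n_2$ pointing away from $f$ and labels $x_1,x_2$; with $\epsilon=+1$ if $(n_2,n_1)$ is a positive basis of $\mathbb{R}^2$ and $-1$ otherwise, the weight is $\epsilon(e,x_1,x_2)$. $c_{D,C}$ is the sum of the weights of all crossings, and $\Phi_\theta(D)=\{\theta(c_{D,C})\mid C\text{ a coloring of }D\}$ as a multi-set (set with repetitions). *)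

(* Defs.v *)
(* Combinatorial model of unoriented link diagrams in R^2
   (planar-diagram codes with a planarity condition) and of
   (X,rho)_Y-colorings with Y = {e} a one-point set. *)
From HB Require Import structures.
From mathcomp Require Import all_boot all_order all_algebra.
Unset Printing Implicit Defensive.
Import GRing.Theory Num.Theory.

(* A diagram with n crossings: each crossing c has four "slots"
   (c,0),(c,1),(c,2),(c,3), the four ends of semi-arcs meeting at c,
   listed COUNTERCLOCKWISE around the crossing point.  Slots 0 and 2 are the
   ends of the under strand, slots 1 and 3 those of the over strand.
   [glue] is a fixed-point-free involution pairing the two ends of each
   semi-arc (an edge of the underlying 4-valent plane graph).
   [nfree] is the number of crossingless circle components. *)
Definition slot (n : nat) := ('I_n * 'I_4)%type.

Definition i0 : 'I_4 := @Ordinal 4 0 isT.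
Definition i1 : 'I_4 := @Ordinal 4 1 isT.
Definition i2 : 'I_4 := @Ordinal 4 2 isT.
Definition i3 : 'I_4 := @Ordinal 4 3 isT.

Definition rot4 (k : 'I_4) : 'I_4 := inord (k.+1 %% 4).
Definition opp4 (k : 'I_4) : 'I_4 := inord ((k + 2) %% 4).

Record diagram := Diagram {
  ncross : nat;
  nfree : nat;
  glue : slot ncross -> slot ncross }.

Definition wf_diagram (D : diagram) : Prop :=
  (forall s, glue D (glue D s) = s) /\ (forall s, glue D s != s).

(* Planarity: the combinatorial map (rotation = ccw order of slots, edge
   involution = glue) has genus 0 on every connected component, i.e. by
   Euler's formula  V - E + F = 2 * (#connected components), with
   V = n, E = 2n, faces = orbits of rotation o glue. *)
Definition sigma (D : diagram) (s : slot (ncross D)) : slot (ncross D) :=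
  (s.1, rot4 s.2).
Definition face_perm (D : diagram) (s : slot (ncross D)) : slot (ncross D) :=
  sigma D (glue D s).
Definition nfaces (D : diagram) : nat :=
  #|[set [set t | fconnect (face_perm D) s t] | s : slot (ncross D)]|.
Definition graph_rel (D : diagram) : rel (slot (ncross D)) :=
  fun s t => [|| t == sigma D s, s == sigma D t, t == glue D s | s == glue D t].
Definition ngraphcomp (D : diagram) : nat :=
  #|[set [set t | connect (graph_rel D) s t] | s : slot (ncross D)]|.
Definition planar (D : diagram) : Prop :=
  nfaces D = (ncross D + 2 * ngraphcomp D)%N.

(* Link components: generated by going along a semi-arc (glue) and going
   straight through a crossing (slot k <-> slot k+2). *)
Definition strand_rel (D : diagram) : rel (slot (ncross D)) :=
  fun s t => [|| t == glue D s, s == glue D t,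
                 t == (s.1, opp4 s.2) | s == (t.1, opp4 t.2)].
Definition link_comp (D : diagram) (s : slot (ncross D)) : {set slot (ncross D)} :=
  [set t | connect (strand_rel D) s t].
Definition ncomponents (D : diagram) : nat :=
  (#|[set link_comp D s | s : slot (ncross D)]| + nfree D)%N.

(* Orientations: o s = true iff the oriented semi-arc ending at slot s
   enters the crossing there. *)
Definition orientation (D : diagram) (o : slot (ncross D) -> bool) : Prop :=
  [/\ forall s, o (glue D s) = ~~ o s,
      forall c, o (c, i0) != o (c, i2) &
      forall c, o (c, i1) != o (c, i3)].

(* With slot k in direction v_k = (cos k pi/2, sin k pi/2), the sign of an
   oriented crossing is sign det(t_over, t_under) (right-handed = +1);
   computing the tangents gives: +1 iff o(c,0) != o(c,1). *)
Definition crossing_sign (D : diagram) (o : slot (ncross D) -> bool) (c : 'I_(ncross D)) : int :=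
  if o (c, i0) != o (c, i1) then 1%R else (-1)%R.

Definition linking_number (D : diagram) (o : slot (ncross D) -> bool) : int :=
  ((\sum_(c < ncross D | link_comp D (c, i0) != link_comp D (c, i1))
      crossing_sign D o c) %/ 2)%Z.

(* A normal orientation of a semi-arc is encoded by the tangent
   orientation t with normal = t rotated by +90 degrees.  An assignment
   gives, at every slot s, (dir, label): dir = true iff the tangent enters
   the crossing at s; the label is that of the semi-arc.  Free circles get
   a (normal, label) pair each.  At slot k: dir = true -> normal v_(k-1),
   dir = false -> normal v_(k+1). *)
Section Colorings.
Variables (X : finType) (op : X -> X -> X) (rho : X -> X) (theta : X -> X -> int).

Definition assign (D : diagram) :=
  ({ffun slot (ncross D) -> bool * X} * {ffun 'I_(nfree D) -> bool * X})%type.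

(* Crossing conditions (i) and (ii); d = dirs, l = labels at slots 0..3.
   Normals of slots 1,3 coherent iff d 1 != d 3; of slots 0,2 iff d 0 != d 2.
   Over semi-arc at slot 1 has normal v_0 if d 1 (pointing from the slot-2
   under semi-arc to the slot-0 one), v_2 otherwise; slot 3: v_2 if d 3,
   v_0 otherwise. *)
Definition cross_ok (d : 'I_4 -> bool) (l : 'I_4 -> X) : bool :=
  let cohO := d i1 != d i3 in
  let cohU := d i0 != d i2 in
  [&& l i1 == (if cohO then l i3 else rho (l i3)),
      (if d i1 then op (l i2) (l i1) == (if cohU then l i0 else rho (l i0))
       else op (l i0) (l i1) == (if cohU then l i2 else rho (l i2))) &
      (if d i3 then op (l i0) (l i3) == (if cohU then l i2 else rho (l i2))
       else op (l i2) (l i3) == (if cohU then l i0 else rho (l i0)))].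

Definition is_coloring (D : diagram) (a : assign D) : bool :=
  [forall s, ((a.1 (glue D s)).1 == ~~ (a.1 s).1)
             && ((a.1 (glue D s)).2 == (a.1 s).2)]
  && [forall c, cross_ok (fun k => (a.1 (c, k)).1) (fun k => (a.1 (c, k)).2)].

Definition binv (f : bool) (p : bool * X) : bool * X :=
  if f then (~~ p.1, rho p.2) else p.

Definition inv_equiv (D : diagram) (a b : assign D) : bool :=
  [exists f : {ffun slot (ncross D) -> bool},
   exists g : {ffun 'I_(nfree D) -> bool},
     [&& [forall s, f (glue D s) == f s],
         [forall s, b.1 s == binv (f s) (a.1 s)] &
         [forall i, b.2 i == binv (g i) (a.2 i)]]].

Definition colorings (D : diagram) : {set {set assign D}} :=
  [set [set b | inv_equiv D a b] | a in [set a | is_coloring D a]].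

(* Weight at crossing c computed with the region f between slots 0 and 1:
   under semi-arc facing f is at slot 0, over one at slot 1.  Normals
   pointing away from f: n1 = v_3 (slot 0), n2 = v_2 (slot 1); labels are
   replaced by rho(.) when the normal has to be inverted. *)
Definition eps01 : int :=
  let n1 := (0%R, (-1)%R) : int * int in
  let n2 := ((-1)%R, 0%R) : int * int in
  if (0 < n2.1 * n1.2 - n2.2 * n1.1)%R then 1%R else (-1)%R.

Definition weight (D : diagram) (a : assign D) : int :=
  \sum_(c < ncross D)
    let d k := (a.1 (c, k)).1 in
    let l k := (a.1 (c, k)).2 in
    (eps01 * theta (if d i0 then l i0 else rho (l i0))
                   (if d i1 then rho (l i1) else l i1))%R.

Definition class_weight (D : diagram) (C : {set assign D}) : int :=
  if [pick a in C] is Some a then weight D a else 0%R.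

(* Phi_theta(D) as a multiset (a list up to permutation) *)
Definition Phi (D : diagram) : seq int :=
  [seq class_weight D C | C <- enum (colorings D)].
End Colorings.

(* The specific data: trivial quandle of order 4.
   Element (b, p): b = false for index 1, true for index 2; p = primed. *)
Definition Q := (bool * bool)%type.
Definition e1 : Q := (false, false).
Definition e1' : Q := (false, true).
Definition e2 : Q := (true, false).
Definition e2' : Q := (true, true).
Definition qop (x y : Q) : Q := x.
Definition qrho (x : Q) : Q := (x.1, ~~ x.2).
Definition chi (a b x y : Q) : int := if (x == a) && (y == b) then 1%R else 0%R.
Definition theta6 (x y : Q) : int :=
  (chi e1 e2 x y + chi e1' e2' x y - chi e1' e2 x y - chi e1 e2' x y)%R.

Definition Phi_theta (D : diagram) : seq int := @Phi Q qop qrho theta6 D.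

(* Main.v *)
From HB Require Import structures.
From mathcomp Require Import all_boot all_order all_algebra.
Require Import Defs.
Set Implicit Arguments. Unset Strict Implicit. Unset Printing Implicit Defensive.
Import Order.TTheory GRing.Theory Num.Theory.
From mathcomp Require Import zify.
From mathcomp.algebra_tactics Require Import ring.
Local Open Scope ring_scope.

Section LA.
Variable T : finType.
Local Notation N := #|T|.

Definition vec (u : T -> rat) : 'rV[rat]_N := \row_j u (enum_val j).
Definition fn (v : 'rV[rat]_N) (x : T) : rat := v 0 (enum_rank x).

Lemma fn_vec u x : fn (vec u) x = u x.
Proof. by rewrite /fn /vec mxE enum_rankK. Qed.

Lemma vec_fn v : vec (fn v) = v.
Proof. by apply/rowP=> j; rewrite /vec /fn mxE enum_valK. Qed.

Lemma fn_inj v1 v2 : (forall x, fn v1 x = fn v2 x) -> v1 = v2.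
Proof. by move=> H; rewrite -(vec_fn v1) -(vec_fn v2); apply/rowP=> j; rewrite !mxE H. Qed.

Lemma sum_ord_T (F : T -> rat) : \sum_(j < N) F (enum_val j) = \sum_x F x.
Proof. by rewrite -(big_enum_val (A := predT)). Qed.

Lemma fn_mul m (v : 'rV[rat]_N) (A : 'M[rat]_(N, m)) j :
  (v *m A) 0 j = \sum_x fn v x * A (enum_rank x) j.
Proof.
rewrite mxE -sum_ord_T; apply: eq_bigr => i _; by rewrite /fn enum_valK.
Qed.

Definition Pm (p : T -> T) : 'M[rat]_N :=
  \matrix_(i, j) ((enum_val i == p (enum_val j))%:R).

Lemma fn_Pm v p x : fn (v *m Pm p) x = fn v (p x).
Proof.
rewrite /fn fn_mul (bigD1 (p x)) //= big1 ?addr0.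
  by rewrite mxE !enum_rankK eqxx mulr1 /fn.
move=> y /negPf Hy; by rewrite mxE !enum_rankK Hy mulr0.
Qed.

Definition classes (r : rel T) : {set {set T}} :=
  [set [set y | connect r x y] | x in T].

Definition Cmat (r : rel T) : 'M[rat]_(#|classes r|, N) :=
  \matrix_(i, j) ((enum_val j \in (enum_val i : {set T}))%:R).

Variable r : rel T.
Hypothesis rsym : connect_sym r.

Lemma class_eq K z : K \in classes r -> z \in K -> K = [set y | connect r z y].
Proof.
case/imsetP=> x _ -> ; rewrite inE => Hxz; apply/setP=> y; rewrite !inE.
apply/idP/idP=> H; first by rewrite (connect_trans _ H) // rsym.
exact: connect_trans Hxz H.
Qed.

Lemma class_closed K x y : K \in classes r -> r x y -> (x \in K) = (y \in K).
Proof.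
case/imsetP=> z _ -> Hxy; rewrite !inE; apply/idP/idP=> H.
  by apply: connect_trans H (connect1 Hxy).
apply: connect_trans H _; rewrite rsym; exact: connect1.
Qed.

Lemma Cmat_const v x y : (v <= Cmat r)%MS -> r x y -> fn v x = fn v y.
Proof.
case/submxP=> D -> Hxy; rewrite /fn !mxE; apply: eq_bigr => i _.
rewrite !mxE !enum_rankK (class_closed (enum_valP i) Hxy) //.
Qed.

Definition pfn (v : 'rV[rat]_N) (K : {set T}) : rat :=
  if [pick z in K] is Some z then fn v z else 0.

Lemma const_Cmat v : (forall x y, r x y -> fn v x = fn v y) -> (v <= Cmat r)%MS.
Proof.
move=> Hv; apply/submxP.
exists (\row_(i < #|classes r|) pfn v (enum_val i)).
apply: fn_inj => x; rewrite /fn mxE.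
have Kx : [set y | connect r x y] \in classes r by apply: imset_f.
rewrite (bigD1 (enum_rank_in Kx [set y | connect r x y])) //= big1.
  rewrite !mxE enum_rankK !enum_rankK_in // inE connect0 mulr1 addr0.
  rewrite /pfn; case: pickP => [z|]; last by move/(_ x); rewrite inE connect0.
  rewrite inE => Hz.
  have cl : closed r [pred t | fn v t == fn v x].
    by move=> a b Hab; rewrite !inE (Hv _ _ Hab).
  by have := closed_connect cl Hz; rewrite !inE eqxx => /esym/eqP.
move=> i Hi; rewrite !mxE enum_rankK.
case: (boolP (x \in enum_val i)) => Hxi; last by rewrite mulr0.
exfalso; move/eqP: Hi; apply.
apply: enum_val_inj; rewrite enum_rankK_in //.
exact: class_eq (enum_valP i) Hxi.
Qed.

Lemma rank_Cmat : \rank (Cmat r) = #|classes r|.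
Proof.
apply/eqP; rewrite eqn_leq rank_leq_row /=.
pose R : 'M[rat]_(N, #|classes r|) :=
  \matrix_(j, i) ([pick z in (enum_val i : {set T})] == Some (enum_val j))%:R.
have HR : Cmat r *m R = 1%:M.
  apply/matrixP=> i i'; rewrite !mxE.
  have [z Hz Hz0] : exists2 z, [pick z in (enum_val i' : {set T})] = Some z & z \in (enum_val i' : {set T}).
    case: pickP => [z Hz|]; first by exists z.
    have /imsetP[x _ ->] := enum_valP i'.
    by move/(_ x); rewrite inE connect0.
  rewrite (bigD1 (enum_rank z)) //= big1.
    rewrite !mxE !enum_rankK Hz eqxx mulr1 addr0.
    case: (eqVneq i i') => [->|Hii]; first by rewrite Hz0.
    case: (boolP (z \in _)) => // Hin.
    exfalso; move/eqP: Hii; apply; apply: enum_val_inj.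
    by rewrite (class_eq (enum_valP i) Hin) (class_eq (enum_valP i') Hz0).
  move=> j /negPf Hj; rewrite !mxE Hz.
  case: (eqVneq z (enum_val j)) => [E|Ne].
    by move: Hj; rewrite E enum_valK eqxx.
  by rewrite (inj_eq (@Some_inj _)) (negPf Ne) mulr0.
by rewrite -{1}(mxrank1 rat #|classes r|) -HR mxrankM_maxl.
Qed.
End LA.

Lemma rot4_inj : injective rot4.
Proof.
move=> x y H; have := congr1 val H; rewrite /= !inordK ?ltn_mod //.
by case: x y {H} => [[|[|[|[|?]]]] ?] [[|[|[|[|?]]]] ?] //= _; apply/val_inj.
Qed.

Section Map.
Variable D : diagram.
Local Notation n := (ncross D).
Local Notation T := (slot (ncross D)).
Hypothesis Hinv : forall s, glue D (glue D s) = s.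
Hypothesis Hfp : forall s, glue D s != s.

Lemma glue_inj : injective (glue D).
Proof. exact: can_inj Hinv. Qed.

Lemma sigma_inj : injective (sigma D).
Proof. by case=> c k [c' k'] [-> /rot4_inj ->]. Qed.

Lemma face_inj : injective (face_perm D).
Proof. by move=> s t /sigma_inj /glue_inj. Qed.

Lemma cardT : #|{: T}| = (4 * n)%N.
Proof. by rewrite card_prod !card_ord mulnC. Qed.

Lemma nfacesE : nfaces D = #|classes (coerced_frel (face_perm D))|.
Proof. by []. Qed.

Lemma ngraphE : ngraphcomp D = #|classes (graph_rel D)|.
Proof. by []. Qed.

Lemma graph_sym : connect_sym (graph_rel D).
Proof.
apply: sym_connect_sym => s t; rewrite /graph_rel.
by apply/idP/idP => /or4P [] ->; rewrite ?orbT.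
Qed.

Lemma face_sym : connect_sym (coerced_frel (face_perm D)).
Proof. move=> x y; exact: (fconnect_sym face_inj). Qed.

Local Notation N := #|{: T}|.

Lemma fn_add (u v : 'rV[rat]_N) x : fn (u + v) x = fn u x + fn v x.
Proof. by rewrite /fn mxE. Qed.
Lemma fn_sub (u v : 'rV[rat]_N) x : fn (u - v) x = fn u x - fn v x.
Proof. by rewrite /fn !mxE. Qed.
Lemma fn_mul1 (u : 'rV[rat]_N) : u *m 1%:M = u.
Proof. by rewrite mulmx1. Qed.

Definition Delta : 'M[rat]_N := Pm (sigma D) - 1%:M.
Lemma fn_Delta v x : fn (v *m Delta) x = fn v (sigma D x) - fn v x.
Proof. by rewrite /Delta mulmxBr mulmx1 fn_sub fn_Pm. Qed.

Definition Sv : 'M[rat]_(N, n) := \matrix_(i, c) ((enum_val i).1 == c)%:R.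
Definition Lam := row_mx (1%:M + Pm (glue D)) Sv.

Lemma sum_slot (F : T -> rat) c :
  \sum_x F x * ((x.1 == c)%:R) = \sum_(k < 4) F (c, k).
Proof.
rewrite (eq_bigr (fun p : T => F (p.1, p.2) * ((p.1 == c)%:R))); last by case.
rewrite -(pair_bigA _ (fun a b => F (a, b) * ((a == c)%:R))) /=.
rewrite (bigD1 c) //= [X in _ + X]big1 ?addr0.
  by apply: eq_bigr => k _; rewrite eqxx mulr1.
by move=> c' /negPf Hc; apply: big1 => k _; rewrite Hc mulr0.
Qed.

Lemma fn_Sv u c : (u *m Sv) 0 c = \sum_(k < 4) fn u (c, k).
Proof.
rewrite fn_mul -sum_slot; apply: eq_bigr => x _; by rewrite mxE enum_rankK.
Qed.

Lemma ker_Lam u : (forall x, fn u (glue D x) = - fn u x) ->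
  (forall c, \sum_(k < 4) fn u (c, k) = 0) -> (u <= kermx Lam)%MS.
Proof.
move=> H1 H2; rewrite sub_kermx mul_mx_row row_mx_eq0; apply/andP; split.
  apply/eqP; apply: fn_inj => x; rewrite mulmxDr mulmx1 fn_add fn_Pm H1.
  by rewrite /fn mxE subrr.
by apply/eqP/rowP => c; rewrite fn_Sv H2 mxE.
Qed.

Lemma sum_rot (F : 'I_4 -> rat) : \sum_(k < 4) F (rot4 k) = \sum_(k < 4) F k.
Proof. by rewrite [RHS](reindex_inj rot4_inj). Qed.

Definition rF := coerced_frel (face_perm D).
Definition Hf := Cmat rF.
Definition Cg := Cmat (graph_rel D).

Lemma Hf_face v x : (v <= Hf)%MS -> fn v (face_perm D x) = fn v x.
Proof. by move=> Hv; rewrite (Cmat_const face_sym (x := x) (y := face_perm D x) Hv) //= eqxx. Qed.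

Lemma Im_sub_W : (Hf *m Delta <= kermx Lam)%MS.
Proof.
apply/row_subP => i; rewrite row_mul; have Hv := row_sub i Hf.
move: (row i Hf) Hv => v Hv; apply: ker_Lam.
  move=> x; rewrite !fn_Delta.
  have E1 := Hf_face x Hv; have E2 := Hf_face (glue D x) Hv.
  rewrite /face_perm Hinv in E2; rewrite /face_perm in E1.
  by rewrite E1 -E2 opprB.
move=> c; rewrite (eq_bigr (fun k => fn v (c, rot4 k) - fn v (c, k))); last first.
  by move=> k _; rewrite fn_Delta.
by rewrite sumrB (sum_rot (fun k => fn v (c, k))) subrr.
Qed.

Lemma rank_cap_Hf : (\rank (Hf :&: kermx Delta) <= ngraphcomp D)%N.
Proof.
rewrite ngraphE -(rank_Cmat graph_sym); apply: mxrankS.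
apply/row_subP => i; have := row_sub i (Hf :&: kermx Delta)%MS.
move: (row i _) => u; rewrite sub_capmx => /andP[Hu /sub_kermxP Hk].
have Hs x : fn u (sigma D x) = fn u x.
  by apply/eqP; rewrite -subr_eq0 -fn_Delta Hk /fn mxE.
have Hg x : fn u (glue D x) = fn u x.
  by rewrite -Hs -(Hf_face x Hu).
apply: (const_Cmat graph_sym) => x y /or4P [] /eqP ->; by rewrite ?Hs ?Hg.
Qed.

Lemma Pm_tr_inv : (Pm (glue D))^T = Pm (glue D).
Proof.
apply/matrixP => i j; rewrite !mxE.
have -> : (enum_val j == glue D (enum_val i)) = (enum_val i == glue D (enum_val j)).
  apply/eqP/eqP => [->|->]; by rewrite Hinv.
by [].
Qed.

Definition chi (x : T) : rat :=
  if (enum_rank x < enum_rank (glue D x))%N then 1 else -1.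

Lemma chi_glue x : chi (glue D x) = - chi x.
Proof.
rewrite /chi Hinv.
have Hne : enum_rank x != enum_rank (glue D x).
  by apply/negP => /eqP /enum_rank_inj H; move: (Hfp x); rewrite -H eqxx.
case: (ltngtP (enum_rank x) (enum_rank (glue D x))) Hne => H Hn.
- by rewrite ?opprK.
- by rewrite ?opprK.
- by case/negP: Hn; apply/eqP/val_inj.
Qed.

Lemma chi_sq x : chi x * chi x = 1.
Proof. by rewrite /chi; case: ifP; rewrite ?mulr1 ?mulrNN ?mulr1. Qed.

Lemma rank_sym : (4 * n <= 2 * \rank (1%:M + Pm (glue D))%R)%N.
Proof.
rewrite -cardT.
set X := 1%:M + Pm (glue D); set Y := 1%:M - Pm (glue D).
pose Dc : 'M[rat]_N := diag_mx (\row_j chi (enum_val j)).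
have HY : Y = Dc *m X *m Dc.
  apply/matrixP => i j; rewrite mul_mx_diag mul_diag_mx !mxE.
  case: (eqVneq i j) => [->|Hij].
    case: eqP => [E|_]; first by move: (Hfp (enum_val j)); rewrite -E eqxx.
    by rewrite mulr1 chi_sq.
  rewrite !add0r.
  case: (enum_val i =P glue D (enum_val j)) => [E|_] /=.
    by rewrite E chi_glue mulr1 mulNr chi_sq.
  by rewrite oppr0 mulr0 mul0r.
have rY : (\rank Y <= \rank X)%N.
  by rewrite HY; apply: leq_trans (mxrankM_maxl _ _) (mxrankM_maxr _ _).
have H1 : (1%:M <= X + Y)%MS.
  have -> : (1%:M : 'M[rat]_N) = 2^-1 *: (X + Y)%R.
    apply/matrixP => a b; rewrite /X /Y !mxE.
    by case: (a == b); rewrite /=; field.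
  by rewrite scalemx_sub // addmx_sub_adds.
have := mxrankS H1; rewrite mxrank1 => HN.
apply: leq_trans HN _; apply: leq_trans (mxrank_adds_leqif X Y) _.
move: rY; rewrite /X; lia.
Qed.

Lemma rank_Sv : (n <= \rank Sv)%N.
Proof.
pose R : 'M[rat]_(n, N) := \matrix_(c, j) (enum_val j == (c, i0))%:R.
have HR : R *m Sv = 1%:M.
  apply/matrixP => c c'; rewrite !mxE (bigD1 (enum_rank (c, i0))) //= big1.
    by rewrite !mxE !enum_rankK eqxx mul1r addr0.
  move=> j Hj; rewrite !mxE; case: eqP => [E|]; last by rewrite mul0r.
  by move: Hj; rewrite -E enum_valK eqxx.
by rewrite -{1}(mxrank1 rat n) -HR mxrankM_maxr.
Qed.

Lemma rank_Lam : (3 * n <= \rank Lam + ngraphcomp D)%N.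
Proof.
rewrite -mxrank_tr tr_row_mx.
have -> : \rank (col_mx (1%:M + Pm (glue D))%R^T Sv^T) =
          \rank ((1%:M + Pm (glue D))%R^T + Sv^T)%MS by rewrite addsmxE.
have Hc := mxrank_sum_cap (1%:M + Pm (glue D))%R^T Sv^T.
have Hcap : (\rank ((1%:M + Pm (glue D))%R^T :&: Sv^T) <= ngraphcomp D)%N.
  rewrite ngraphE -(rank_Cmat graph_sym); apply: mxrankS.
  apply/row_subP => i; have := row_sub i ((1%:M + Pm (glue D))%R^T :&: Sv^T)%MS.
  move: (row i _) => u; rewrite sub_capmx => /andP[/submxP[A HA] /submxP[B HB]].
  have Hg x : fn u (glue D x) = fn u x.
    rewrite HA linearD /= trmx1 Pm_tr_inv mulmxDr mulmx1 !fn_add !fn_Pm Hinv.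
    by rewrite addrC.
  have Hsv x : fn u x = B 0 x.1.
    rewrite HB /fn mxE (bigD1 x.1) //= big1 ?addr0.
      by rewrite !mxE enum_rankK eqxx mulr1.
    by move=> c Hc'; rewrite !mxE enum_rankK eq_sym (negPf Hc') mulr0.
  have Hs x : fn u (sigma D x) = fn u x by rewrite !Hsv.
  apply: (const_Cmat graph_sym) => x y /or4P [] /eqP ->; by rewrite ?Hs ?Hg.
have := rank_sym; have := rank_Sv => h1 h2.
rewrite !mxrank_tr in Hc.
move: Hc h1 h2 Hcap; set a := \rank ((1%:M + Pm (glue D))^T + Sv^T)%MS; set b := \rank ((1%:M + Pm (glue D))^T :&: Sv^T)%MS; set x := \rank (1%:M + Pm (glue D))%R; set y := \rank Sv. lia.
Qed.

Hypothesis Hplanar : planar D.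

Lemma W_sub_Im : (kermx Lam <= Hf *m Delta)%MS.
Proof.
have HI := mxrank_mul_ker Hf Delta.
have rHf : \rank Hf = nfaces D by rewrite nfacesE rank_Cmat //; exact: face_sym.
have HK : \rank (kermx Lam) = (4 * n - \rank Lam)%N.
  by rewrite mxrank_ker; congr (_ - _)%N; exact: cardT.
have := rank_Lam; have := rank_cap_Hf; move: Hplanar; rewrite /planar => hp h1 h2.
have Hle : (\rank (kermx Lam) <= \rank (Hf *m Delta))%N.
  rewrite HK; move: HI rHf hp h1 h2. set a := \rank (Hf :&: kermx Delta)%MS. set b := \rank (Hf *m Delta). set c := \rank Hf. set d := \rank Lam. lia.
have [H1 H2] := mxrank_leqif_sup Im_sub_W.
by rewrite -H2 eqn_leq H1 Hle.
Qed.

Theorem potential (w : T -> rat) :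
  (forall x, w (glue D x) = - w x) -> (forall c, \sum_(k < 4) w (c, k) = 0) ->
  exists h : T -> rat, (forall x, h (face_perm D x) = h x) /\
                       (forall x, h (sigma D x) = h x + w x).
Proof.
move=> H1 H2.
have Hw : (vec w <= kermx Lam)%MS.
  apply: ker_Lam => [x|c]; first by rewrite !fn_vec.
  by rewrite (eq_bigr (fun k => w (c, k))) ?H2 // => k _; rewrite fn_vec.
have /submxP [X HX] := submx_trans Hw W_sub_Im.
exists (fn (X *m Hf)); split.
  by move=> x; apply: Hf_face; exact: submxMl.
move=> x; have := fn_vec w x; rewrite HX mulmxA fn_Delta => <-.
by rewrite addrC subrK.
Qed.
End Map.

Lemma rot4_0 : rot4 i0 = i1. Proof. by apply/val_inj; rewrite /= inordK. Qed.
Lemma rot4_1 : rot4 i1 = i2. Proof. by apply/val_inj; rewrite /= inordK. Qed.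
Lemma rot4_2 : rot4 i2 = i3. Proof. by apply/val_inj; rewrite /= inordK. Qed.
Lemma rot4_3 : rot4 i3 = i0. Proof. by apply/val_inj; rewrite /= inordK. Qed.
Lemma opp4_0 : opp4 i0 = i2. Proof. by apply/val_inj; rewrite /= inordK. Qed.
Lemma opp4_1 : opp4 i1 = i3. Proof. by apply/val_inj; rewrite /= inordK. Qed.
Lemma opp4_2 : opp4 i2 = i0. Proof. by apply/val_inj; rewrite /= inordK. Qed.
Lemma opp4_3 : opp4 i3 = i1. Proof. by apply/val_inj; rewrite /= inordK. Qed.

Lemma sum4 (V : nmodType) (F : 'I_4 -> V) :
  \sum_(k < 4) F k = F i0 + F i1 + F i2 + F i3.
Proof.
rewrite !big_ord_recl big_ord0 addr0 /= !addrA.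
by congr (_ + _ + _ + _); congr F; apply/val_inj.
Qed.

Lemma ord4_cases (k : 'I_4) : [\/ k = i0, k = i1, k = i2 | k = i3].
Proof.
case: k => [[|[|[|[|?]]]] Hk] //.
- by apply: Or41; apply/val_inj.
- by apply: Or42; apply/val_inj.
- by apply: Or43; apply/val_inj.
- by apply: Or44; apply/val_inj.
Qed.

Section Topo.
Variable D : diagram.
Local Notation n := (ncross D).
Local Notation T := (slot (ncross D)).
Hypothesis Hinv : forall s, glue D (glue D s) = s.
Hypothesis Hfp : forall s, glue D s != s.
Hypothesis Hplanar : planar D.
Variable o : T -> bool.
Hypothesis Ho : orientation D o.
Variable A : {set T}.
Hypothesis HA : forall x y, strand_rel D x y -> (x \in A) = (y \in A).

Lemma A_glue x : (glue D x \in A) = (x \in A).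
Proof. by rewrite (HA (x := x) (y := glue D x)) // /strand_rel eqxx. Qed.

Lemma A_opp c k : ((c, opp4 k) \in A) = ((c, k) \in A).
Proof. by rewrite -(HA (x := (c, k)) (y := (c, opp4 k))) //= /strand_rel eqxx !orbT. Qed.

Lemma o_glue x : o (glue D x) = ~~ o x.
Proof. by case: Ho. Qed.
Lemma o_02 c : o (c, i2) = ~~ o (c, i0).
Proof. by case: Ho => _ /(_ c) H _; move: H; case: (o (c, i0)); case: (o (c, i2)). Qed.
Lemma o_13 c : o (c, i3) = ~~ o (c, i1).
Proof. by case: Ho => _ _ /(_ c) H; move: H; case: (o (c, i1)); case: (o (c, i3)). Qed.

Definition wA (x : T) : rat := if x \in A then (if o x then -1 else 1) else 0.

Lemma wA_glue x : wA (glue D x) = - wA x.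
Proof. by rewrite /wA A_glue o_glue; case: (x \in A); case: (o x); rewrite ?opprK ?oppr0. Qed.

Lemma wA_sum c : \sum_(k < 4) wA (c, k) = 0.
Proof.
rewrite sum4 /wA o_02 o_13 -opp4_0 A_opp -opp4_1 A_opp.
by case: ((c, i0) \in A); case: ((c, i1) \in A); case: (o (c, i0)); case: (o (c, i1)); rewrite /=; ring.
Qed.

Definition sgr (c : 'I_n) : rat := if o (c, i0) != o (c, i1) then 1 else -1.

Lemma topo :
  \sum_(c < n | ((c, i0) \notin A) && ((c, i1) \in A)) sgr c =
  \sum_(c < n | ((c, i0) \in A) && ((c, i1) \notin A)) sgr c.
Proof.
have [h [Hface Hsig]] := potential Hinv Hfp Hplanar wA_glue wA_sum.
pose l (x : T) := if o x then h x else h (sigma D x).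
pose G (x : T) := if x \in A then 0 else (if o x then - l x else l x).
have Hl x : l (glue D x) = l x.
  rewrite /l o_glue; case: (o x) => /=.
    by have := Hface x; rewrite /face_perm.
  by have := Hface (glue D x); rewrite /face_perm Hinv.
have HG x : G (glue D x) = - G x.
  by rewrite /G A_glue o_glue Hl; case: (x \in A); case: (o x); rewrite ?opprK ?oppr0.
have H0 : \sum_x G x = 0.
  have E : \sum_x G x = \sum_x G (glue D x).
    by apply: (reindex_inj (glue_inj Hinv)).
  have E2 : \sum_x G (glue D x) = - \sum_x G x.
    by rewrite -sumrN; apply: eq_bigr => x _; rewrite HG.
  move: E; rewrite E2; set S := \sum_x G x => E.
  have : S * 2 = 0 by rewrite mulr_natr mulr2n {1}E addNr.
  by move/eqP; rewrite mulf_eq0 => /orP [/eqP //|].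
have Hloc c : \sum_(k < 4) G (c, k) =
   (if ((c, i0) \notin A) && ((c, i1) \in A) then sgr c else 0) -
   (if ((c, i0) \in A) && ((c, i1) \notin A) then sgr c else 0).
  have Hs k : h (c, rot4 k) = h (c, k) + wA (c, k) by exact: (Hsig (c, k)).
  have h1 := Hs i0; have h2 := Hs i1; have h3 := Hs i2; have h4 := Hs i3.
  rewrite rot4_0 in h1; rewrite rot4_1 in h2; rewrite rot4_2 in h3; rewrite rot4_3 in h4.
  rewrite sum4 /G /l /sigma /= rot4_0 rot4_1 rot4_2 rot4_3 h2 h3 h1 /sgr.
  move: h4; rewrite h3 h2 h1 /wA o_02 o_13 -opp4_0 A_opp -opp4_1 A_opp.
  by case: ((c, i0) \in A); case: ((c, i1) \in A); case: (o (c, i0)); case: (o (c, i1)) => /= _; ring.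
move: H0; rewrite (eq_bigr (fun p : T => G (p.1, p.2))); last by case.
rewrite -(pair_bigA _ (fun a b => G (a, b))) /= (eq_bigr _ (fun c _ => Hloc c)).
rewrite sumrB -!big_mkcond /= => /eqP; rewrite subr_eq0 => /eqP.
by [].
Qed.
End Topo.

Lemma qrhoK : involutive qrho.
Proof. by case=> a b; rewrite /qrho /= negbK. Qed.

Lemma binvK f p : binv _ qrho f (binv _ qrho f p) = p.
Proof. by case: f; case: p => d l //=; rewrite negbK qrhoK. Qed.

Lemma binvA f g p : binv _ qrho f (binv _ qrho g p) = binv _ qrho (f (+) g) p.
Proof. by case: f; case: g; case: p => d l //=; rewrite negbK qrhoK. Qed.

Section Col.
Variable D : diagram.
Local Notation n := (ncross D).
Local Notation T := (slot (ncross D)).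
Local Notation AS := (assign Q D).

Definition ieqR (a b : AS) :=
  exists f : {ffun T -> bool}, exists g : {ffun 'I_(nfree D) -> bool},
   [/\ forall s, f (glue D s) = f s,
       forall s, b.1 s = binv _ qrho (f s) (a.1 s) &
       forall i, b.2 i = binv _ qrho (g i) (a.2 i)].

Lemma ieqP a b : reflect (ieqR a b) (inv_equiv _ qrho D a b).
Proof.
apply: (iffP existsP) => [[f /existsP [g /and3P [/forallP H1 /forallP H2 /forallP H3]]]|].
  by exists f, g; split => x; apply/eqP.
case=> f [g [H1 H2 H3]]; exists f; apply/existsP; exists g.
by apply/and3P; split; apply/forallP => x; apply/eqP.
Qed.

Lemma ieq_refl a : inv_equiv _ qrho D a a.
Proof.
apply/ieqP; exists [ffun=> false], [ffun=> false]; split => x; rewrite ?ffunE //.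
Qed.

Lemma ieq_sym a b : inv_equiv _ qrho D a b -> inv_equiv _ qrho D b a.
Proof.
move/ieqP => [f [g [H1 H2 H3]]]; apply/ieqP; exists f, g; split => // x.
  by rewrite H2 binvK.
by rewrite H3 binvK.
Qed.

Lemma ieq_trans a b c :
  inv_equiv _ qrho D a b -> inv_equiv _ qrho D b c -> inv_equiv _ qrho D a c.
Proof.
move/ieqP => [f [g [H1 H2 H3]]] /ieqP [f' [g' [H1' H2' H3']]]; apply/ieqP.
exists [ffun s => f' s (+) f s], [ffun i => g' i (+) g i]; split => x; rewrite ?ffunE.
- by rewrite H1 H1'.
- by rewrite H2' H2 binvA.
- by rewrite H3' H3 binvA.
Qed.

Lemma class_ieq a b : inv_equiv _ qrho D a b ->
  [set c | inv_equiv _ qrho D a c] = [set c | inv_equiv _ qrho D b c].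
Proof.
move=> Hab; apply/setP => c; rewrite !inE; apply/idP/idP => H.
  exact: ieq_trans (ieq_sym Hab) H.
exact: ieq_trans Hab H.
Qed.

Lemma wterm_binv f g (p q : bool * Q) :
  theta6 (if (binv _ qrho f p).1 then (binv _ qrho f p).2 else qrho (binv _ qrho f p).2)
         (if (binv _ qrho g q).1 then qrho (binv _ qrho g q).2 else (binv _ qrho g q).2) =
  theta6 (if p.1 then p.2 else qrho p.2) (if q.1 then qrho q.2 else q.2).
Proof. by case: f; case: g; case: p => [[] ?]; case: q => [[] ?]; rewrite /= ?qrhoK. Qed.

Lemma weight_ieq a b : inv_equiv _ qrho D a b -> weight _ qrho theta6 D a = weight _ qrho theta6 D b.
Proof.
move/ieqP => [f [g [H1 H2 H3]]]; apply: eq_bigr => c _ /=.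
by rewrite !H2 wterm_binv.
Qed.
End Col.

Lemma key13 (d1 d3 o1 : bool) (l1 l3 : Q) :
  l1 == (if d1 != d3 then l3 else qrho l3) ->
  (if d1 == o1 then l1 else qrho l1) = (if d3 == ~~ o1 then l3 else qrho l3).
Proof. by move/eqP ->; case: d1; case: d3; case: o1; rewrite /= ?qrhoK. Qed.

Lemma key02 (d0 d1 d2 o0 : bool) (l0 l2 : Q) :
  (if d1 then qop l2 l0 == (if d0 != d2 then l0 else qrho l0)
   else qop l0 l2 == (if d0 != d2 then l2 else qrho l2)) ->
  (if d0 == o0 then l0 else qrho l0) = (if d2 == ~~ o0 then l2 else qrho l2).
Proof.
rewrite /qop; case: d1 => /eqP ->; case: d0; case: d2; case: o0; by rewrite /= ?qrhoK.
Qed.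

Section Col2.
Variable D : diagram.
Local Notation n := (ncross D).
Local Notation T := (slot (ncross D)).
Local Notation AS := (assign Q D).
Hypothesis Hinv : forall s, glue D (glue D s) = s.
Variable o : T -> bool.
Hypothesis Ho : orientation D o.

Definition Nl (a : AS) (s : T) : Q :=
  if (a.1 s).1 == o s then (a.1 s).2 else qrho (a.1 s).2.
Definition Ml (a : AS) (i : 'I_(nfree D)) : Q :=
  if (a.2 i).1 then (a.2 i).2 else qrho (a.2 i).2.

Local Notation isc := (is_coloring _ qop qrho D).
Local Notation ieq := (inv_equiv _ qrho D).

Lemma o_glue' x : o (glue D x) = ~~ o x.
Proof. by case: Ho. Qed.
Lemma o_02' c : o (c, i2) = ~~ o (c, i0).
Proof. by case: Ho => _ /(_ c) H _; move: H; case: (o (c, i0)); case: (o (c, i2)). Qed.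
Lemma o_13' c : o (c, i3) = ~~ o (c, i1).
Proof. by case: Ho => _ _ /(_ c) H; move: H; case: (o (c, i1)); case: (o (c, i3)). Qed.

Lemma isc_glue a s : isc a ->
  (a.1 (glue D s)).1 = ~~ (a.1 s).1 /\ (a.1 (glue D s)).2 = (a.1 s).2.
Proof. by case/andP => /forallP /(_ s) /andP [/eqP -> /eqP ->]. Qed.

Lemma Nl_glue a s : isc a -> Nl a (glue D s) = Nl a s.
Proof.
move=> Ha; have [E1 E2] := isc_glue s Ha; rewrite /Nl E1 E2 o_glue'.
by case: (a.1 s).1; case: (o s).
Qed.

Lemma Nl_02 a c : isc a -> Nl a (c, i2) = Nl a (c, i0).
Proof.
case/andP => _ /forallP /(_ c) /and3P [_ H _]; rewrite /Nl o_02'.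
by symmetry; apply: key02 H.
Qed.

Lemma Nl_13 a c : isc a -> Nl a (c, i3) = Nl a (c, i1).
Proof.
case/andP => _ /forallP /(_ c) /and3P [H _ _]; rewrite /Nl o_13'.
by symmetry; apply: key13 H.
Qed.

Lemma Nl_opp a c k : isc a -> Nl a (c, opp4 k) = Nl a (c, k).
Proof.
move=> Ha; case: (ord4_cases k) => ->.
- by rewrite opp4_0 Nl_02.
- by rewrite opp4_1 Nl_13.
- by rewrite opp4_2 Nl_02.
- by rewrite opp4_3 Nl_13.
Qed.

Lemma Nl_strand a x y : isc a -> strand_rel D x y -> Nl a x = Nl a y.
Proof.
move=> Ha /or4P [] /eqP ->; rewrite ?Nl_glue //.
- by case: x => c k; rewrite /= Nl_opp.
- by case: y => c k; rewrite /= Nl_opp.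
Qed.

Lemma strand_sym : connect_sym (strand_rel D).
Proof.
apply: sym_connect_sym => s t; rewrite /strand_rel.
by apply/idP/idP => /or4P [] ->; rewrite ?orbT.
Qed.

Lemma Nl_connect a x y : isc a -> connect (strand_rel D) x y -> Nl a x = Nl a y.
Proof.
move=> Ha Hc.
have cl : closed (strand_rel D) [pred t | Nl a t == Nl a x].
  by move=> u v Huv; rewrite !inE (Nl_strand Ha Huv).
by have := closed_connect cl Hc; rewrite !inE eqxx => /esym/eqP.
Qed.
End Col2.

Section Struct.
Variable D : diagram.
Local Notation n := (ncross D).
Local Notation T := (slot (ncross D)).

Definition Pc := [set link_comp D s | s : T].
Definition Abase : {set T} :=
  if [pick s : T] is Some s then link_comp D s else set0.

Lemma lc_mem s : s \in link_comp D s.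
Proof. by rewrite inE connect0. Qed.

Lemma lc_eq s t : t \in link_comp D s -> link_comp D t = link_comp D s.
Proof.
rewrite inE => Hst; apply/setP => u; rewrite !inE; apply/idP/idP => H.
  exact: connect_trans Hst H.
by rewrite (connect_trans _ H) // strand_sym.
Qed.

Lemma HA_base x y : strand_rel D x y -> (x \in Abase) = (y \in Abase).
Proof.
rewrite /Abase; case: pickP => [s0 _|_] Hxy; last by rewrite !inE.
rewrite !inE; apply/idP/idP => H; first exact: connect_trans H (connect1 Hxy).
by apply: connect_trans H _; rewrite strand_sym; apply: connect1.
Qed.

Lemma struct : ncomponents D = 2%N ->
 [\/ exists s0 s1, [/\ Abase = link_comp D s0, s1 \notin Abase, nfree D = 0%N &
                      forall s, s \notin Abase -> connect (strand_rel D) s1 s],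
     exists s0, [/\ Abase = link_comp D s0, nfree D = 1%N & forall s, s \in Abase]
   | [/\ n = 0%N, nfree D = 2%N & #|Pc| = 0%N] ].
Proof.
move=> H2'; have H2 : (#|Pc| + nfree D)%N = 2%N := H2'; clear H2'.
rewrite /Abase; case: pickP => [s0 _ | Hnone].
  have HA0 : link_comp D s0 \in Pc by apply: imset_f.
  case: (boolP [forall s, s \in link_comp D s0]) => [/forallP Hall | /forallP Hn].
    apply: Or32; exists s0; split => //.
    have : Pc = [set link_comp D s0].
      apply/setP => K; rewrite inE; apply/imsetP/eqP => [[s _ ->]|->].
        exact: lc_eq (Hall s).
      by exists s0.
    by move=> HP; move: H2; rewrite HP cards1; lia.
  have [s1 Hs1] : exists s1, s1 \notin link_comp D s0.
    by apply/existsP; rewrite -negb_forall; apply/negP => /forallP.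
  apply: Or31; exists s0, s1.
  have HA1 : link_comp D s1 \in Pc by apply: imset_f.
  have Hne : link_comp D s0 != link_comp D s1.
    by apply/eqP => E; move: Hs1; rewrite E lc_mem.
  have Hsub : [set link_comp D s0; link_comp D s1] \subset Pc.
    by apply/subsetP => K; rewrite !inE => /orP [] /eqP ->.
  have Hc := subset_leq_card Hsub; rewrite cards2 Hne /= in Hc.
  have HP : [set link_comp D s0; link_comp D s1] = Pc.
    apply/eqP; rewrite eqEcard Hsub /= cards2 Hne /=. move: H2. set pp := #|Pc|. set ff := nfree D. lia.
  split => //; first by move: H2 Hc; set pp := #|Pc|; set ff := nfree D; lia.
  move=> s Hs; have : link_comp D s \in Pc by apply: imset_f.
  rewrite -HP !inE => /orP [/eqP E|/eqP E].
    by move: Hs; rewrite -E lc_mem.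
  by have := lc_mem s; rewrite E inE.
apply: Or33.
have Hn0 : n = 0%N.
  case: n Hnone => // m Hnone; by have := Hnone (ord0, i0).
have HP : Pc = set0.
  apply/setP => K; rewrite inE; apply/imsetP => [[s _ _]]; by have := Hnone s.
by move: H2; rewrite HP cards0 => H2; split.
Qed.
End Struct.

Section Ap.
Variable D : diagram.
Local Notation n := (ncross D).
Local Notation T := (slot (ncross D)).
Local Notation AS := (assign Q D).
Variable o : T -> bool.
Hypothesis Ho : orientation D o.
Local Notation isc := (is_coloring _ qop qrho D).
Local Notation ieq := (inv_equiv _ qrho D).
Local Notation A := (Abase D).

Definition lab (x y : Q) (s : T) : Q := if s \in A then x else y.
Definition flab (x y : Q) (i : 'I_(nfree D)) : Q :=
  if (i + #|Pc D|)%N == 0%N then x else y.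
Definition ap (x y : Q) : AS :=
  ([ffun s => (o s, lab x y s)], [ffun i => (true, flab x y i)]).

Lemma A_glue' s : (glue D s \in A) = (s \in A).
Proof. by rewrite (HA_base (x := s) (y := glue D s)) // /strand_rel eqxx. Qed.
Lemma A_opp' c k : ((c, opp4 k) \in A) = ((c, k) \in A).
Proof. by rewrite -(HA_base (x := (c, k)) (y := (c, opp4 k))) //= /strand_rel eqxx !orbT. Qed.

Lemma ap_col x y : isc (ap x y).
Proof.
apply/andP; split; apply/forallP.
  by move=> s; rewrite !ffunE /= o_glue' // /lab A_glue' !eqxx.
move=> c; rewrite /cross_ok !ffunE /= /lab.
rewrite (o_02' Ho) (o_13' Ho) -opp4_0 -opp4_1 !A_opp'.
by case: (o (c, i0)); case: (o (c, i1)); rewrite /qop /= !eqxx.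
Qed.

Lemma ap_ieq a x y : isc a -> (forall s, lab x y s = Nl o a s) ->
  (forall i, flab x y i = Ml a i) -> ieq (ap x y) a.
Proof.
move=> Ha H1 H2; apply/ieqP.
exists [ffun s => (a.1 s).1 != o s], [ffun i => ~~ (a.2 i).1]; split => z; rewrite !ffunE.
- have [E _] := isc_glue z Ha; rewrite E o_glue' //.
  by case: (a.1 z).1; case: (o z).
- rewrite H1 /Nl /=; case: (a.1 z) => d l /=.
  by case: d; case: (o z); rewrite /= ?qrhoK.
- rewrite H2 /Ml /=; case: (a.2 z) => d l /=.
  by case: d; rewrite /= ?qrhoK.
Qed.

Lemma ieq_ap x y b : ieq (ap x y) b ->
  (forall s, Nl o b s = lab x y s) /\ (forall i, Ml b i = flab x y i).
Proof.
move/ieqP => [f [g [H1 H2 H3]]]; split => z.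
  rewrite /Nl H2 ffunE; case: (f z) => /=; rewrite ?eqxx //.
  by case: (o z); rewrite /= qrhoK.
by rewrite /Ml H3 ffunE; case: (g z) => /=; rewrite ?qrhoK.
Qed.
End Ap.

Section Gam.
Variable D : diagram.
Local Notation n := (ncross D).
Local Notation T := (slot (ncross D)).
Local Notation AS := (assign Q D).
Hypothesis Hinv : forall s, glue D (glue D s) = s.
Variable o : T -> bool.
Hypothesis Ho : orientation D o.
Hypothesis H2 : ncomponents D = 2%N.
Local Notation isc := (is_coloring _ qop qrho D).
Local Notation ieq := (inv_equiv _ qrho D).
Local Notation A := (Abase D).

Lemma H2' : (#|Pc D| + nfree D)%N = 2%N.
Proof. exact: H2. Qed.

Lemma Nl_ap x y s : Nl o (ap o x y) s = lab x y s.
Proof. by rewrite /Nl ffunE /= eqxx. Qed.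
Lemma Ml_ap x y i : Ml (ap o x y) i = flab x y i.
Proof. by rewrite /Ml ffunE. Qed.

Lemma ap_inj x y x' y' : ieq (ap o x y) (ap o x' y') -> (x, y) = (x', y').
Proof.
move/ieq_ap => [E1 E2].
have L (s : T) : lab x y s = lab x' y' s by rewrite -E1 Nl_ap.
have F (i : 'I_(nfree D)) : flab x y i = flab x' y' i by rewrite -E2 Ml_ap.
have HP := H2'.
case: (struct H2).
- move=> [s0 [s1 [HA Hs1 _ _]]].
  have Hs0 : s0 \in A by rewrite HA lc_mem.
  have := L s0; have := L s1; rewrite /lab Hs0 (negPf Hs1) => -> -> //.
- move=> [s0 [HA Hf _]].
  have Hs0 : s0 \in A by rewrite HA lc_mem.
  have h0 : (0 < nfree D)%N by rewrite Hf.
  have := L s0; have := F (Ordinal h0); rewrite /lab /flab Hs0 /=.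
  have -> : (#|Pc D| == 0%N) = false by apply/negbTE; move: HP; rewrite Hf; lia.
  by move=> -> ->.
- move=> [_ Hf Hc].
  have h0 : (0 < nfree D)%N by rewrite Hf.
  have h1 : (1 < nfree D)%N by rewrite Hf.
  have := F (Ordinal h0); have := F (Ordinal h1); rewrite /flab /= Hc !addn0 /=.
  by move=> -> ->.
Qed.

Lemma ap_surj a : isc a -> exists x y, ieq (ap o x y) a.
Proof.
move=> Ha; have HP := H2'.
case: (struct H2).
- move=> [s0 [s1 [HA Hs1 Hf Hc]]].
  exists (Nl o a s0), (Nl o a s1); apply: ap_ieq => //.
    move=> s; rewrite /lab; case: ifP => Hs.
      by apply: Nl_connect => //; move: Hs; rewrite HA inE.
    by apply: Nl_connect => //; apply: Hc; rewrite Hs.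
  by move=> [i Hi]; exfalso; move: Hi; rewrite Hf.
- move=> [s0 [HA Hf Hall]].
  have h0 : (0 < nfree D)%N by rewrite Hf.
  exists (Nl o a s0), (Ml a (Ordinal h0)); apply: ap_ieq => //.
    move=> s; rewrite /lab Hall.
    by apply: Nl_connect => //; move: (Hall s); rewrite HA inE.
  move=> i; rewrite /flab.
  have -> : ((i + #|Pc D|)%N == 0%N) = false.
    by apply/negbTE; move: HP Hf; set pp := #|Pc D|; set ff := nfree D; lia.
  congr Ml; apply: ord_inj => /=; have := ltn_ord i; move: Hf; set ff := nfree D; lia.
- move=> [Hn Hf Hc].
  have h0 : (0 < nfree D)%N by rewrite Hf.
  have h1 : (1 < nfree D)%N by rewrite Hf.
  exists (Ml a (Ordinal h0)), (Ml a (Ordinal h1)); apply: ap_ieq => //.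
    by move=> [[c Hcn] k]; exfalso; move: Hcn; rewrite Hn.
  move=> i; rewrite /flab Hc addn0.
  case: i => [[|[|k]] Hk] /=.
  - by congr Ml; apply: ord_inj.
  - by congr Ml; apply: ord_inj.
  - by exfalso; move: Hk; rewrite Hf.
Qed.

Definition Gam (p : Q * Q) : {set AS} := [set b | ieq (ap o p.1 p.2) b].

Lemma Gam_inj : injective Gam.
Proof.
move=> [x y] [x' y'] E; apply: ap_inj.
have : ap o x' y' \in Gam (x', y') by rewrite inE ieq_refl.
by rewrite -E inE.
Qed.

Lemma mem_col C : (C \in colorings _ qop qrho D) = [exists p, C == Gam p].
Proof.
apply/imsetP/existsP => [[a] |[[x y] /eqP ->]].
  rewrite inE => Ha ->; have [x [y Hxy]] := ap_surj Ha.
  by exists (x, y); rewrite /Gam /= (class_ieq Hxy).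
by exists (ap o x y); rewrite // inE ap_col.
Qed.

Lemma cw_Gam p : class_weight _ qrho theta6 D (Gam p) = weight _ qrho theta6 D (ap o p.1 p.2).
Proof.
rewrite /class_weight; case: pickP => [b|].
  by rewrite inE => Hb; rewrite (weight_ieq Hb).
by move/(_ (ap o p.1 p.2)); rewrite inE ieq_refl.
Qed.

Definition QL := [:: e1; e1'; e2; e2'].
Definition L16 := [seq (x, y) | x <- QL, y <- QL].

Lemma Phi_perm :
  perm_eq (Phi_theta D) [seq weight _ qrho theta6 D (ap o p.1 p.2) | p <- L16].
Proof.
have Hp : perm_eq (enum (colorings _ qop qrho D)) (map Gam L16).
  apply: uniq_perm; first exact: enum_uniq.
    by rewrite (map_inj_uniq Gam_inj).
  move=> C; rewrite mem_enum mem_col; apply/existsP/mapP => [[p /eqP ->]|[p _ ->]].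
    by exists p => //; case: p => [[[] []] [[] []]].
  by exists p.
rewrite /Phi_theta /Phi; have := perm_map (class_weight _ qrho theta6 D) Hp.
by rewrite -map_comp (eq_map (g := fun p => weight _ qrho theta6 D (ap o p.1 p.2))) // => p /=; rewrite cw_Gam.
Qed.
End Gam.

Definition coef (u v : Q) : int :=
  if ~~ u.1 && v.1 then (if u.2 == v.2 then 1 else -1) else 0.

Lemma cross_term (a0 a1 o0 o1 : bool) (x y : Q) :
  let L0 := if a0 then x else y in
  let L1 := if a1 then x else y in
  let s : int := if o0 != o1 then 1 else -1 in
  eps01 * theta6 (if o0 then L0 else qrho L0) (if o1 then qrho L1 else L1) =
  (if a0 && ~~ a1 then coef x y * s else 0) + (if ~~ a0 && a1 then coef y x * s else 0).
Proof.
by case: a0; case: a1; case: o0; case: o1; case: x => [[] []]; case: y => [[] []].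
Qed.

Section Wt.
Variable D : diagram.
Local Notation n := (ncross D).
Local Notation T := (slot (ncross D)).
Variable o : T -> bool.
Local Notation A := (Abase D).

Definition WAB : int := \sum_(c < n | ((c, i0) \in A) && ((c, i1) \notin A)) crossing_sign D o c.
Definition WBA : int := \sum_(c < n | ((c, i0) \notin A) && ((c, i1) \in A)) crossing_sign D o c.

Lemma weight_ap x y : weight _ qrho theta6 D (ap o x y) = coef x y * WAB + coef y x * WBA.
Proof.
rewrite /weight.
transitivity (\sum_(c < n)
  ((if ((c, i0) \in A) && ~~ ((c, i1) \in A) then coef x y * crossing_sign D o c else 0) +
   (if ~~ ((c, i0) \in A) && ((c, i1) \in A) then coef y x * crossing_sign D o c else 0))).
  apply: eq_bigr => c _; rewrite /= !ffunE /=.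
  exact: (cross_term ((c, i0) \in A) ((c, i1) \in A) (o (c, i0)) (o (c, i1)) x y).
rewrite big_split /= /WAB /WBA !mulr_sumr /=.
congr (_ + _); rewrite [RHS]big_mkcond; apply: eq_bigr => c _; by case: ifP.
Qed.
End Wt.

Lemma final_perm (m : int) :
  perm_eq [seq coef p.1 p.2 * m + coef p.2 p.1 * m | p <- L16]
    [:: m; m; m; m; (- m)%R; (- m)%R; (- m)%R; (- m)%R;
        0%R; 0%R; 0%R; 0%R; 0%R; 0%R; 0%R; 0%R].
Proof.
have -> : [seq coef p.1 p.2 * m + coef p.2 p.1 * m | p <- L16] =
   map (fun k => k * m) [seq coef p.1 p.2 + coef p.2 p.1 | p <- L16].
  by rewrite -map_comp; apply: eq_map => p /=; rewrite mulrDl.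
have -> : [:: m; m; m; m; (- m)%R; (- m)%R; (- m)%R; (- m)%R;
        0%R; 0%R; 0%R; 0%R; 0%R; 0%R; 0%R; 0%R] =
  map (fun k => k * m) [:: 1; 1; 1; 1; -1; -1; -1; -1; 0; 0; 0; 0; 0; 0; 0; 0].
  by rewrite /= mul1r mulN1r mul0r.
by apply: perm_map.
Qed.

Section Fin.
Variable D : diagram.
Local Notation n := (ncross D).
Local Notation T := (slot (ncross D)).
Hypothesis Hinv : forall s, glue D (glue D s) = s.
Hypothesis Hfp : forall s, glue D s != s.
Hypothesis Hpl : planar D.
Variable o : T -> bool.
Hypothesis Ho : orientation D o.
Hypothesis H2 : ncomponents D = 2%N.
Local Notation A := (Abase D).

Lemma cs_sgr c : (crossing_sign D o c)%:~R = sgr o c.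
Proof. by rewrite /crossing_sign /sgr; case: ifP => _; rewrite ?rmorphN. Qed.

Lemma WAB_WBA : WAB o = WBA o.
Proof.
apply/eqP; rewrite -(eqr_int rat) /WAB /WBA !rmorph_sum /=.
rewrite (eq_bigr (fun c => sgr o c)); last by move=> c _; rewrite cs_sgr.
rewrite [X in _ == X](eq_bigr (fun c => sgr o c)); last by move=> c _; rewrite cs_sgr.
by rewrite (topo Hinv Hfp Hpl Ho (@HA_base D)).
Qed.

Lemma Wm : WAB o = linking_number D o /\ WBA o = linking_number D o.
Proof.
rewrite -WAB_WBA; suff -> : linking_number D o = WAB o by [].
rewrite /linking_number.
case: (struct H2).
- move=> [s0 [s1 [HA Hs1 _ Hc]]].
  have Hlc s : link_comp D s = if s \in A then A else link_comp D s1.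
    case: ifP => Hs.
      by rewrite HA; apply: lc_eq; rewrite -HA.
    apply: lc_eq; rewrite inE; apply: Hc; by rewrite Hs.
  have Hne : link_comp D s1 != A.
    by apply/eqP => E; move: Hs1; rewrite -E lc_mem.
  have Hne' : A != link_comp D s1 by rewrite eq_sym.
  rewrite (bigID (fun c => (c, i0) \in A)) /=.
  rewrite (eq_bigl (fun c => ((c, i0) \in A) && ((c, i1) \notin A))); last first.
    by move=> c; rewrite (Hlc (c, i0)) (Hlc (c, i1)); case: ((c, i0) \in A); case: ((c, i1) \in A); rewrite /= ?eqxx ?Hne ?Hne'.
  rewrite [X in (_ + X)%R](eq_bigl (fun c => ((c, i0) \notin A) && ((c, i1) \in A))); last first.
    by move=> c; rewrite (Hlc (c, i0)) (Hlc (c, i1)); case: ((c, i0) \in A); case: ((c, i1) \in A); rewrite /= ?eqxx ?Hne ?Hne'.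
  rewrite -/(WAB o) -/(WBA o) -WAB_WBA.
  have -> : (WAB o + WAB o = WAB o * 2)%R by lia.
  by rewrite mulzK.
- move=> [s0 [HA _ Hall]].
  have Hlc s : link_comp D s = A by rewrite HA; apply: lc_eq; rewrite -HA.
  rewrite big1; last by move=> c; rewrite (Hlc (c, i0)) (Hlc (c, i1)) eqxx.
  rewrite div0z /WAB big1 // => c; by rewrite (Hall (c, i1)) andbF.
- move=> [Hn _ _].
  rewrite big1; last by case=> c Hc; exfalso; move: Hc; rewrite Hn.
  rewrite div0z /WAB big1 // => [[c Hc]]; exfalso; move: Hc; by rewrite Hn.
Qed.
End Fin.

Local Close Scope ring_scope.
Unset Implicit Arguments.

Theorem proposition6p6 (D : diagram) (o : slot (ncross D) -> bool) :
  wf_diagram D -> planar D -> ncomponents D = 2%N -> orientation D o ->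
  let m := linking_number D o in
  perm_eq (Phi_theta D)
    [:: m; m; m; m; (- m)%R; (- m)%R; (- m)%R; (- m)%R;
        0%R; 0%R; 0%R; 0%R; 0%R; 0%R; 0%R; 0%R].
Proof.
move=> [Hinv Hfp] Hpl H2 Ho; cbv zeta; set m := linking_number D o.
apply: perm_trans (Phi_perm Ho H2) _.
have [E1 E2] := Wm Hinv Hfp Hpl Ho H2.
rewrite (eq_map (g := fun p => (coef p.1 p.2 * m + coef p.2 p.1 * m)%R)); last first.
  by move=> p; rewrite weight_ap E1 E2.
exact: final_perm.
Qed.
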